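(* Fix integers $t\ge1$, $C_1,\dots,C_t\ge 1$, $A_1,\dots,A_t$ and $B_1,\dots,B_t$ with $0\le A_i\le C_i/2$ and $0\le B_i\le C_i/2$ for all $i$, and $m\ge 0$, $N_0\ge 1$. Let $S$ (resp. $T$) be the multiset of positive integers containing, for each $i=1,\dots,t$, one copy of each positive integer congruent to $A_i$ (resp. $B_i$) modulo $C_i$ and, separately, one copy of each positive integer congruent to $-A_i$ (resp. $-B_i$) modulo $C_i$, all copies regarded as distinct elements (so a residue class with $A_i\equiv -A_i$, resp. $B_i\equiv -B_i$, modulo $C_i$ contributes two copies). Let $D_S(N)$ (resp. $D_T(N)$) be the number of partitions of $N$ into distinct elements of $S$ (resp. $T$), where, if no $A_i$ (resp. no $B_i$) equals $0$, only partitions with an odd number of parts are counted. Let $z_A$, $z_B$ be the numbers of indices $i$ with $A_i=0$, resp. $B_i=0$, and set $p=\max(z_B,1)-\max(z_A,1)$. Then the following are equivalent: (i) For every $N\ge N_0$, the number of tuples $(\mu_1,\dots,\mu_t;d_1,\dots,d_t)\in P^t\times\mathbb Z^t$ with $\sum_i d_i$ odd and $\sum_{i}C_i|\mu_i|+\sum_i C_i\binom{d_i}{2}+\sum_i A_id_i=N$ equals the number of tuples $(\alpha_1,\dots,\alpha_t;e_1,\dots,e_t)\in P^t\times\mathbb Z^t$ with $\sum_i e_i$ odd and $\sum_i C_i|\alpha_i|+\sum_i C_i\binom{e_i}{2}+\sum_i B_ie_i+m=N$. (ii) For every $N\ge N_0$, $D_S(N)=2^{p}\cdot D_T(N-m)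$.
   Context: $P$ denotes the set of all integer partitions into positive parts (including the empty partition $\emptyset$, the unique partition of $0$); for a partition $\lambda$, $|\lambda|$ is the sum of its parts. For $d\in\mathbb Z$, $\binom{d}{2}=d(d-1)/2$. A partition of $N$ into distinct elements of a multiset $S$ is a finite set of distinct elements of $S$ (distinct copies of the same integer count as distinct elements) whose values sum to $N$; $D_T(n)=0$ for $n<0$. *)

(* Defs.v *)
From HB Require Import structures.
From mathcomp Require Import all_boot all_order all_algebra.
From Stdlib Require Import ClassicalEpsilon.
Set Implicit Arguments. Unset Strict Implicit. Unset Printing Implicit Defensive.
Import Order.TTheory GRing.Theory Num.Theory.

Definition is_card (X : eqType) (P : X -> Prop) (n : nat) : Prop :=
  exists s : seq X, [/\ uniq s, (forall x, P x <-> x \in s) & size s = n].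

(* Number of elements of a finite predicate (0 if P is infinite; this case
   never arises below). *)
Definition ncard (X : eqType) (P : X -> Prop) : nat :=
  match excluded_middle_informative (exists n, is_card P n) with
  | left H => proj1_sig (constructive_indefinite_description _ H)
  | right _ => 0%N
  end.

Definition is_partition (l : seq nat) : bool :=
  sorted geq l && all (fun x => 0 < x)%N l.

Definition binz (d : int) : int := ((d * (d - 1)) %/ 2)%Z.

Local Open Scope ring_scope.

Definition tuple_rep (t : nat) (C A : 'I_t -> nat) (s : nat) (N : int)
    (x : {ffun 'I_t -> seq nat} * {ffun 'I_t -> int}) : Prop :=
  [/\ forall i, is_partition (x.1 i),
      ~~ (2 %| \sum_(i < t) x.2 i)%Z &
      \sum_(i < t) ((C i)%:Z * (sumn (x.1 i))%:Z)
      + \sum_(i < t) ((C i)%:Z * binz (x.2 i))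
      + \sum_(i < t) ((A i)%:Z * x.2 i) + s%:Z = N].

(* The multiset S: its elements are triples (i, b, n); b = true is the copy
   of the class n = A_i mod C_i, b = false the copy of the class
   n = -A_i mod C_i; n positive. *)
Definition inS (t : nat) (C A : 'I_t -> nat) (k : 'I_t * bool) (n : nat) : bool :=
  (0 < n)%N &&
  (if k.2 then n == A k.1 %[mod C k.1] else (C k.1 %| n + A k.1)%N).

(* A partition of N into distinct elements of S: a finite set of elements of
   S, represented, for each copy-class k = (i, b), by the strictly decreasing
   list of the chosen integers of that class. *)
Definition distinct_part (t : nat) (C A : 'I_t -> nat) (N : int)
    (f : {ffun 'I_t * bool -> seq nat}) : Prop :=
  [/\ forall k, sorted (fun a b => b < a)%N (f k) && all (inS C A k) (f k),
      (\sum_(k : 'I_t * bool) sumn (f k))%:Z = N &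
      [forall i, A i != 0%N] -> odd (\sum_(k : 'I_t * bool) size (f k))].

Definition Dcount (t : nat) (C A : 'I_t -> nat) (N : int) : nat :=
  ncard (distinct_part C A N).

Definition zcount (t : nat) (A : 'I_t -> nat) : nat := #|[pred i | A i == 0%N]|.

(* Main.v *)
Require Import Defs.
From HB Require Import structures.
From mathcomp Require Import all_boot all_order all_algebra.
From mathcomp Require Import zify ring lra.
From Stdlib Require Import ClassicalEpsilon Classical.
Import Order.TTheory GRing.Theory Num.Theory.

Section Part1.
Set Implicit Arguments. Unset Strict Implicit. Unset Printing Implicit Defensive.

Lemma is_card_uniq (X : eqType) (P : X -> Prop) n1 n2 :
  is_card P n1 -> is_card P n2 -> n1 = n2.
Proof.
move=> [s1 [u1 m1 <-]] [s2 [u2 m2 <-]].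
apply: perm_size; apply: uniq_perm => // x.
apply/idP/idP => H; [apply/m2/m1 | apply/m1/m2] => //.
Qed.

Lemma ncardE (X : eqType) (P : X -> Prop) n : is_card P n -> ncard P = n.
Proof.
move=> H; rewrite /ncard; case: excluded_middle_informative => [E|[]]; last by exists n.
case: (constructive_indefinite_description _ E) => /= k Hk.
exact: is_card_uniq Hk H.
Qed.

Lemma ncard_inf (X : eqType) (P : X -> Prop) : ~ (exists n, is_card P n) -> ncard P = 0%N.
Proof. by move=> H; rewrite /ncard; case: excluded_middle_informative. Qed.

Lemma is_card_bij (X Y : eqType) (P : X -> Prop) (Q : Y -> Prop) (f : X -> Y) (g : Y -> X) n :
  (forall x, P x -> Q (f x)) -> (forall y, Q y -> P (g y)) ->
  (forall x, P x -> g (f x) = x) -> (forall y, Q y -> f (g y) = y) ->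
  is_card P n -> is_card Q n.
Proof.
move=> PQ QP gf fg [s [us ms <-]]; exists (map f s); split.
- rewrite map_inj_in_uniq // => x y /ms Px /ms Py E.
  by rewrite -(gf x Px) -(gf y Py) E.
- move=> y; split => [Qy|/mapP [x /ms Px ->]]; last exact: PQ.
  by rewrite -(fg y Qy); apply: map_f; apply/ms/QP.
- by rewrite size_map.
Qed.

Lemma ncard_bij (X Y : eqType) (P : X -> Prop) (Q : Y -> Prop) (f : X -> Y) (g : Y -> X) :
  (forall x, P x -> Q (f x)) -> (forall y, Q y -> P (g y)) ->
  (forall x, P x -> g (f x) = x) -> (forall y, Q y -> f (g y) = y) ->
  ncard P = ncard Q.
Proof.
move=> PQ QP gf fg.
case: (classic (exists n, is_card P n)) => [[n Hn]|NP].
  rewrite (ncardE Hn); symmetry; apply: ncardE; exact: (is_card_bij PQ QP gf fg Hn).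
rewrite (ncard_inf NP) ncard_inf // => [[n Hn]]; apply: NP; exists n.
exact: (is_card_bij QP PQ fg gf Hn).
Qed.

Lemma ncard_ext (X : eqType) (P Q : X -> Prop) : (forall x, P x <-> Q x) -> ncard P = ncard Q.
Proof.
move=> H; apply: (@ncard_bij _ _ P Q id id) => // x; by case: (H x).
Qed.

Lemma ncard_prod (X Y : eqType) (P : X -> Prop) (ys : seq Y) : uniq ys ->
  ncard (fun p : X * Y => P p.1 /\ p.2 \in ys) = (ncard P * size ys)%N.
Proof.
move=> uys.
case: (classic (exists n, is_card P n)) => [[n Hn]|NP].
  rewrite (ncardE Hn); apply: ncardE.
  case: Hn => s [us ms <-]; exists [seq (x, y) | x <- s, y <- ys]; split.
  - by apply: allpairs_uniq => // [[a b]] [c d] _ _ /=.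
  - case=> x y /=; split => [[/ms Px yin] | /allpairsP [[a b] [/= /ms Pa bin [-> ->]]]] //.
    by apply/allpairsP; exists (x, y).
  - by rewrite size_allpairs.
rewrite (ncard_inf NP) mul0n.
case: ys uys => [|y0 ys] uys.
  by apply: ncardE; exists [::]; split => // [[x y]]; rewrite in_nil /=; split => // [[]].
apply: ncard_inf => [[n [s [us ms _]]]]; apply: NP.
exists (size (undup (map fst s))); exists (undup (map fst s)); split => //.
- exact: undup_uniq.
- move=> x; rewrite mem_undup; split => [Px|/mapP [[x' y'] /ms [Px' _] ->]] //.
  by apply: (map_f fst (x := (x, y0))); apply/ms; rewrite /= in_cons eqxx.
Qed.

End Part1.

Section Part2.
Set Implicit Arguments. Unset Strict Implicit. Unset Printing Implicit Defensive.
Local Open Scope ring_scope.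

Lemma binzS (d : int) : binz (d + 1) = binz d + d.
Proof.
rewrite /binz.
have -> : (d + 1) * (d + 1 - 1) = d * 2 + d * (d - 1) by ring.
by rewrite divzMDl // addrC.
Qed.

Fixpoint xsf (l : seq nat) (d : int) : seq int :=
  if l is x :: l' then (x%:Z + d - 1) :: xsf l' (d - 1) else [::].
Fixpoint lam (K : int) (xs : seq int) : seq nat :=
  if xs is x :: xs' then absz (x - K - (size xs')%:Z)%R :: lam K xs' else [::].

Definition validKx (K : int) (xs : seq int) : bool :=
  sorted (fun a b : int => b < a) xs && all (fun x => K < x) xs.

Lemma size_xsf l d : size (xsf l d) = size l.
Proof. by elim: l d => //= x l IH d; rewrite IH. Qed.
Lemma size_lam K xs : size (lam K xs) = size xs.
Proof. by elim: xs => //= x xs ->. Qed.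

Lemma validKx_cons K x xs : validKx K (x :: xs) =
  [&& K < x, (if xs is y :: _ then y < x else true) & validKx K xs].
Proof.
rewrite /validKx /=; case: xs => [|y xs] //=.
by case: (K < x); case: (y < x); rewrite /= ?andbF.
Qed.

Lemma validKx_head K x xs : validKx K (x :: xs) -> K + (size xs)%:Z < x.
Proof.
elim: xs x => [|y xs IH] x; first by rewrite validKx_cons /= addr0 => /andP [].
rewrite validKx_cons => /and3P [_ yx /IH] /=. lia.
Qed.

Lemma V1 l d : is_partition l -> validKx (d - (size l)%:Z) (xsf l d).
Proof.
elim: l d => [|x l IH] d //=.
rewrite /is_partition /= => /andP [Hs /andP [x0 Ha]].
have Hl : is_partition l.
  by rewrite /is_partition Ha andbT; move: Hs; case: l {IH Ha} => //= y l /andP [].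
rewrite validKx_cons; apply/and3P; split.
- lia.
- move: Hs; case: l {IH Ha Hl} => //= y l /andP [yx _]. lia.
- have -> : d - (size l).+1%:Z = d - 1 - (size l)%:Z by lia.
  exact: IH.
Qed.

Lemma V2 K xs : validKx K xs -> is_partition (lam K xs).
Proof.
elim: xs => [|x xs IH] //= Hv.
have Hh := validKx_head Hv.
move: Hv; rewrite validKx_cons => /and3P [_ Hyx Hv].
have := IH Hv; rewrite /is_partition /= => /andP [Hs Ha].
rewrite Ha andbT; apply/andP; split; last by lia.
move: Hs Hyx Hv; case: xs {IH Ha Hh} => //= y xs Hs yx Hv.
rewrite Hs andbT.
have := validKx_head Hv. lia.
Qed.

Lemma R1 l d : lam (d - (size l)%:Z) (xsf l d) = l.
Proof.
elim: l d => //= x l IH d; rewrite size_xsf.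
have -> : d - (size l).+1%:Z = d - 1 - (size l)%:Z by lia.
rewrite IH; congr (_ :: _); lia.
Qed.

Lemma R2 K xs : validKx K xs -> xsf (lam K xs) (K + (size xs)%:Z) = xs.
Proof.
elim: xs => //= x xs IH Hv.
have Hh := validKx_head Hv.
move: Hv; rewrite validKx_cons => /and3P [_ _ Hv].
have -> : K + (size xs).+1%:Z - 1 = K + (size xs)%:Z by lia.
rewrite IH //; congr (_ :: _); lia.
Qed.

Lemma W1 (C A : nat) l d :
  \sum_(x <- xsf l d) (A%:Z + C%:Z * x) + A%:Z * (d - (size l)%:Z)
    + C%:Z * binz (d - (size l)%:Z)
  = A%:Z * d + C%:Z * binz d + C%:Z * (sumn l)%:Z.
Proof.
elim: l d => [|x l IH] d /=; first by rewrite big_nil subr0; ring.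
rewrite big_cons.
have -> : d - (size l).+1%:Z = d - 1 - (size l)%:Z by lia.
have E := IH (d - 1).
have Hb : binz d = binz (d - 1) + (d - 1) by rewrite -binzS subrK.
rewrite Hb.
have -> : (x + sumn l)%N%:Z = x%:Z + (sumn l)%:Z by lia.
move: E; set S := \sum_(_ <- _) _ => E.
lra.
Qed.

End Part2.

Section Part3.
Set Implicit Arguments. Unset Strict Implicit. Unset Printing Implicit Defensive.
Local Open Scope ring_scope.

Definition mX (K : int) (xs : seq int) (p : int) : bool := (p \in xs) || (p < K).
Definition mPH (P H : seq nat) (p : int) : bool :=
  if 0 <= p then absz p \in P else absz p \notin H.

Definition bnd (s : seq int) : nat := (sumn (map absz s)).+1.

Lemma bndP s x : x \in s -> (absz x < bnd s)%N.
Proof.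
rewrite /bnd; elim: s => //= y s IH; rewrite in_cons => /orP [/eqP ->|/IH]; lia.
Qed.

Definition chiP (K : int) (xs : seq int) : seq nat :=
  [seq n <- rev (iota 0 (absz K + bnd xs)) | mX K xs n%:Z].
Definition chiH (K : int) (xs : seq int) : seq nat :=
  [seq h <- rev (iota 1 (absz K)) | ~~ mX K xs (- h%:Z)].

Definition mex (P : seq nat) : nat := find (fun n => n \notin P) (iota 0 (size P).+1).
Definition psiK (P H : seq nat) : int := if H is h :: _ then - h%:Z else (mex P)%:Z.
Definition irange (lo : int) (len : nat) : seq int := [seq lo + n%:Z | n <- rev (iota 0 len)].
Definition psixs (P H : seq nat) : seq int :=
  [seq x <- irange (psiK P H + 1) (absz (psiK P H) + sumn P + 1) | mPH P H x].

Definition gtn_rel := fun a b : nat => (b < a)%N.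
Definition validPH (P H : seq nat) : bool :=
  [&& sorted gtn_rel P, sorted gtn_rel H & all (fun h => 0 < h)%N H].

Lemma gtn_trans : transitive gtn_rel.
Proof. move=> a b c; rewrite /gtn_rel; lia. Qed.
Lemma gtn_irr : irreflexive gtn_rel.
Proof. move=> a; rewrite /gtn_rel; lia. Qed.
Lemma gtz_trans : transitive (fun a b : int => b < a).
Proof. move=> a b c; lia. Qed.
Lemma gtz_irr : irreflexive (fun a b : int => b < a).
Proof. move=> a; lia. Qed.

Lemma sorted_rev_iota a n : sorted gtn_rel (rev (iota a n)).
Proof. rewrite rev_sorted; exact: iota_ltn_sorted. Qed.

Lemma mem_chiP K xs n : (n \in chiP K xs) = mX K xs n%:Z.
Proof.
rewrite /chiP mem_filter mem_rev mem_iota add0n /=.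
case E: (mX K xs n) => //=; move: E; rewrite /mX => /orP [/bndP|]; lia.
Qed.

Lemma mem_chiH K xs h : (h \in chiH K xs) = (0 < h)%N && ~~ mX K xs (- h%:Z).
Proof.
rewrite /chiH mem_filter mem_rev mem_iota /mX negb_or.
case: (- h%:Z \in xs) => /=; first by rewrite !andbF.
lia.
Qed.

Lemma C1 K xs : validPH (chiP K xs) (chiH K xs).
Proof.
apply/and3P; split.
- rewrite /chiP; apply: (sorted_filter gtn_trans); exact: sorted_rev_iota.
- rewrite /chiH; apply: (sorted_filter gtn_trans); exact: sorted_rev_iota.
- by apply/allP => h; rewrite mem_chiH => /andP [].
Qed.

Lemma mex_notin P : mex P \notin P.
Proof.
have Hh : has (fun n => n \notin P) (iota 0 (size P).+1).
  apply/negPn/negP => /hasPn H.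
  have : (size (iota 0 (size P).+1) <= size P)%N.
    apply: uniq_leq_size; first exact: iota_uniq.
    by move=> x /H; rewrite negbK.
  by rewrite size_iota ltnn.
have Hlt := Hh; rewrite has_find size_iota in Hlt.
by have := nth_find 0%N Hh; rewrite nth_iota ?add0n.
Qed.

Lemma mex_lt P n : (n < mex P)%N -> n \in P.
Proof.
move=> Hn.
have Hs : (mex P <= (size P).+1)%N.
  by have := find_size (fun n => n \notin P) (iota 0 (size P).+1); rewrite size_iota.
have := before_find 0%N Hn; rewrite nth_iota ?add0n; last by lia.
by move/negbT; rewrite negbK.
Qed.

Lemma psiK_min P H : validPH P H ->
  ~~ mPH P H (psiK P H) /\ (forall p, p < psiK P H -> mPH P H p).
Proof.
case/and3P => _ sH aH; rewrite /psiK /mPH; case: H sH aH => [|h H] /= sH aH.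
  split; first exact: mex_notin.
  move=> p Hp; case: ifP => // p0; apply: mex_lt; lia.
move: aH => /andP [h0 _].
have Hall := order_path_min gtn_trans sH.
split.
  have -> : (0 <= - h%:Z) = false by lia.
  by rewrite negbK in_cons abszN absz_nat eqxx.
move=> p Hp; have -> : (0 <= p) = false by lia.
rewrite in_cons negb_or; apply/andP; split; first by lia.
apply/negP => /(allP Hall); rewrite /gtn_rel; lia.
Qed.

Lemma mX_min K xs : validKx K xs -> ~~ mX K xs K /\ (forall p, p < K -> mX K xs p).
Proof.
case/andP => _ /allP Ha; split; last by move=> p Hp; rewrite /mX Hp orbT.
rewrite /mX ltxx orbF; apply/negP => /Ha; lia.
Qed.

Lemma min_uniq (f : int -> bool) K1 K2 :
  ~~ f K1 -> (forall p, p < K1 -> f p) -> ~~ f K2 -> (forall p, p < K2 -> f p) -> K1 = K2.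
Proof.
move=> n1 h1 n2 h2; case: (ltgtP K1 K2) => // H.
  by move: (h2 _ H); rewrite (negbTE n1).
by move: (h1 _ H); rewrite (negbTE n2).
Qed.

Lemma mem_irange lo len x : (x \in irange lo len) = (lo <= x) && (x < lo + len%:Z).
Proof.
apply/mapP/idP => [[n]|]; rewrite ?mem_rev ?mem_iota; first by move=> Hn ->; lia.
move=> Hx; exists (absz (x - lo)); last by lia.
by rewrite mem_rev mem_iota; lia.
Qed.

Lemma sorted_irange lo len : sorted (fun a b : int => b < a) (irange lo len).
Proof.
rewrite /irange sorted_map.
apply: sub_sorted (sorted_rev_iota 0 len) => a b; rewrite /gtn_rel /=; lia.
Qed.

Lemma nth_le_sumn (P : seq nat) i : (nth 0%N P i <= sumn P)%N.
Proof.
elim: P i => [|a P IH] [|i] //=; first by lia.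
have := IH i; lia.
Qed.

Lemma mem_psixs P H x : validPH P H ->
  (x \in psixs P H) = (psiK P H < x) && mPH P H x.
Proof.
move=> V; rewrite /psixs mem_filter mem_irange andbC.
case E: (mPH P H x); rewrite ?andbF ?andbT //.
case: (ltrP (psiK P H) x) => Hx /=; last by lia.
have : (0 <= x) -> (absz x <= sumn P)%N.
  move=> x0; move: E; rewrite /mPH x0 => /(nthP 0%N) [i Hi <-].
  exact: nth_le_sumn.
lia.
Qed.

Lemma C2 P H : validPH P H -> validKx (psiK P H) (psixs P H).
Proof.
move=> V; apply/andP; split.
  rewrite /psixs; apply: (sorted_filter gtz_trans); exact: sorted_irange.
by apply/allP => x; rewrite mem_psixs // => /andP [].
Qed.

Lemma mX_psi P H p : validPH P H -> mX (psiK P H) (psixs P H) p = mPH P H p.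
Proof.
move=> V; have [n1 h1] := psiK_min V.
rewrite /mX mem_psixs //.
case: (ltgtP p (psiK P H)) => [Hp|Hp|->] /=; last by rewrite (negbTE n1).
- by rewrite h1.
- by rewrite orbF.
Qed.

Lemma mPH_chi K xs p : mPH (chiP K xs) (chiH K xs) p = mX K xs p.
Proof.
rewrite /mPH; case: ifP => p0.
  by rewrite mem_chiP; congr mX; lia.
rewrite mem_chiH negb_and negbK.
have -> : (- (absz p)%:Z) = p by lia.
have -> : (0 < absz p)%N by lia.
done.
Qed.

Lemma C3 K xs : validKx K xs ->
  psiK (chiP K xs) (chiH K xs) = K /\ psixs (chiP K xs) (chiH K xs) = xs.
Proof.
move=> V.
have V' := C1 K xs.
have [n1 h1] := psiK_min V'.
have [n2 h2] := mX_min V.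
have EK : psiK (chiP K xs) (chiH K xs) = K.
  apply: (min_uniq (f := mX K xs)) => //.
  - by rewrite -mPH_chi.
  - by move=> p Hp; rewrite -mPH_chi; apply: h1.
split => //.
apply: (irr_sorted_eq gtz_trans gtz_irr); first by case/andP: (C2 V').
  by case/andP: V.
move=> x; rewrite mem_psixs // EK mPH_chi /mX.
case/andP: V => _ /allP Ha.
case E: (x \in xs); first by rewrite orTb (Ha _ E).
by rewrite /=; case: (ltgtP x K).
Qed.

Lemma C4 P H : validPH P H ->
  chiP (psiK P H) (psixs P H) = P /\ chiH (psiK P H) (psixs P H) = H.
Proof.
move=> V; have V' := C1 (psiK P H) (psixs P H).
case/and3P: V' => s1 s2 _; case/and3P: (V) => s3 s4 /allP a4.
split; apply: (irr_sorted_eq gtn_trans gtn_irr) => // n.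
  by rewrite mem_chiP mX_psi // /mPH lez_nat absz_nat.
rewrite mem_chiH mX_psi // /mPH.
have -> : (0 <= - n%:Z) = (n == 0)%N by lia.
rewrite abszN absz_nat.
case: (n =P 0)%N => [->|_] /=.
  by apply/esym/negP => /a4.
by rewrite negbK; case E: (n \in H); [rewrite andbT a4 | rewrite andbF].
Qed.

End Part3.

Section Part4.
Set Implicit Arguments. Unset Strict Implicit. Unset Printing Implicit Defensive.
Local Open Scope ring_scope.

Lemma G1 (A C : nat) k :
  \sum_(p <- iota 0 k) (A%:Z + C%:Z * p%:Z) = A%:Z * k%:Z + C%:Z * binz k%:Z.
Proof.
elim: k => [|k IH]; first by rewrite big_nil /binz; lia.
rewrite -addn1 iotaD big_cat big_seq1 IH add0n.
have -> : (k + 1)%N%:Z = k%:Z + 1 by lia.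
rewrite binzS; rewrite -[LHS]/(_ + _)%R; ring.
Qed.

Lemma G2 (A C : nat) k :
  \sum_(h <- iota 1 k) (C%:Z * h%:Z - A%:Z) = A%:Z * (- k%:Z) + C%:Z * binz (- k%:Z).
Proof.
elim: k => [|k IH]; first by rewrite big_nil /binz; lia.
rewrite -[k.+1]addn1 iotaD big_cat big_seq1 IH.
have E := binzS (- (k + 1)%N%:Z).
have E1 : - (k + 1)%N%:Z + 1 = - k%:Z by lia.
rewrite E1 in E; rewrite E; have -> : (1 + k)%N%:Z = k%:Z + 1 by lia.
have -> : (k + 1)%N%:Z = k%:Z + 1 by lia.
rewrite -[LHS]/(_ + _)%R; ring.
Qed.

Lemma nil_of_mem (T : eqType) (s : seq T) : (forall x, x \in s = false) -> s = [::].
Proof. by case: s => // a s H; move: (H a); rewrite in_cons eqxx. Qed.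

Lemma mem_map_absz_pos (xs : seq int) n : all (fun x => 0 <= x) xs ->
  (n \in map absz xs) = (n%:Z \in xs).
Proof.
move=> /allP Ha; apply/mapP/idP => [[x xin ->]|nin]; last by exists n%:Z.
by have := Ha _ xin; move=> x0; have -> : (absz x)%:Z = x by lia.
Qed.

Lemma uniq_map_absz_pos (xs : seq int) : all (fun x => 0 <= x) xs -> uniq xs ->
  uniq (map absz xs).
Proof.
move=> /allP Ha u; rewrite map_inj_in_uniq // => x y /Ha x0 /Ha y0; lia.
Qed.

Lemma mem_map_absz_neg (xs : seq int) n :
  (n \in map absz [seq x <- xs | ~~ (0 <= x)]) = (0 < n)%N && (- n%:Z \in xs).
Proof.
apply/mapP/andP => [[x]|[n0 nin]]; rewrite ?mem_filter.
  by case/andP => x0 xin ->; split; [lia | have -> : - (absz x)%:Z = x by lia].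
by exists (- n%:Z); [rewrite mem_filter nin andbT; lia | lia].
Qed.

Lemma uniq_map_absz_neg (xs : seq int) : uniq xs ->
  uniq (map absz [seq x <- xs | ~~ (0 <= x)]).
Proof.
move=> u; rewrite map_inj_in_uniq ?filter_uniq // => x y.
rewrite !mem_filter => /andP [x0 _] /andP [y0 _]; lia.
Qed.

Lemma uniq_chiP K xs : uniq (chiP K xs).
Proof. by rewrite filter_uniq // rev_uniq iota_uniq. Qed.
Lemma uniq_chiH K xs : uniq (chiH K xs).
Proof. by rewrite filter_uniq // rev_uniq iota_uniq. Qed.

Lemma validKx_uniq K xs : validKx K xs -> uniq xs.
Proof. by case/andP => s _; apply: (sorted_uniq gtz_trans gtz_irr). Qed.

Lemma chi_pos K xs : validKx K xs -> 0 <= K ->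
  chiH K xs = [::] /\ perm_eq (chiP K xs) (map absz xs ++ iota 0 (absz K)).
Proof.
move=> V K0; have u := validKx_uniq V.
have Ha : all (fun x => 0 <= x) xs.
  by case/andP: V => _ /allP Ha; apply/allP => x /Ha; lia.
split.
  apply: nil_of_mem => h; rewrite mem_chiH /mX.
  have -> : (- h%:Z < K) = (0 < h)%N || (0 < K) by lia.
  by case: (0 < h)%N; rewrite /= ?orbT ?andbF.
apply: uniq_perm; first exact: uniq_chiP.
  rewrite cat_uniq uniq_map_absz_pos // iota_uniq andbT /=.
  apply/hasPn => n; rewrite mem_iota mem_map_absz_pos // => Hn.
  apply/negP => /(allP (proj2 (andP V))); lia.
move=> n; rewrite mem_chiP /mX mem_cat mem_map_absz_pos // mem_iota; congr orb; lia.
Qed.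

Lemma chi_neg K xs : validKx K xs -> K < 0 ->
  perm_eq (chiP K xs) (map absz [seq x <- xs | 0 <= x]) /\
  perm_eq (chiH K xs ++ map absz [seq x <- xs | ~~ (0 <= x)]) (iota 1 (absz K)).
Proof.
move=> V K0; have u := validKx_uniq V.
have Ha := proj2 (andP V).
split.
  apply: uniq_perm; first exact: uniq_chiP.
    by apply: uniq_map_absz_pos; [exact: filter_all | rewrite filter_uniq].
  move=> n; rewrite mem_chiP /mX mem_map_absz_pos ?filter_all // mem_filter.
  have -> : (n%:Z < K) = false by lia.
  by rewrite orbF andbC; case: (n%:Z \in xs); rewrite ?andbF ?andbT //; lia.
apply: uniq_perm; last 1 first.
- move=> h; rewrite mem_cat mem_chiH mem_map_absz_neg mem_iota /mX.
  case E: (- h%:Z \in xs) => /=.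
    have := allP Ha _ E; lia.
  lia.
- rewrite cat_uniq uniq_chiH uniq_map_absz_neg //= andbT.
  apply/hasPn => h; rewrite mem_map_absz_neg mem_chiH /mX => /andP [_ ->] /=.
  by rewrite andbF.
- exact: iota_uniq.
Qed.

Lemma C5 (A C : nat) K xs : validKx K xs ->
  \sum_(p <- chiP K xs) (A%:Z + C%:Z * p%:Z) + \sum_(h <- chiH K xs) (C%:Z * h%:Z - A%:Z)
  = \sum_(x <- xs) (A%:Z + C%:Z * x) + A%:Z * K + C%:Z * binz K.
Proof.
move=> V; case: (lerP 0 K) => K0.
  have [H0 Pp] := chi_pos V K0.
  rewrite H0 big_nil addr0 (perm_big _ Pp) big_cat big_map G1 /=.
  have -> : (absz K)%:Z = K by lia.
  rewrite addrA; congr (_ + _ + _); apply: eq_big_seq => x xin.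
  have := allP (proj2 (andP V)) _ xin => Kx.
  have -> : (absz x)%:Z = x by lia.
  done.
have [P1 P2] := chi_neg V K0.
have E : \sum_(h <- chiH K xs ++ map absz [seq x <- xs | ~~ (0 <= x)]) (C%:Z * h%:Z - A%:Z)
  = \sum_(h <- iota 1 (absz K)) (C%:Z * h%:Z - A%:Z) by apply: perm_big.
rewrite big_cat big_map G2 /= in E.
rewrite (@big_filter _ _ _ _ xs) in E.
rewrite (perm_big _ P1) big_map (@big_filter _ _ _ _ xs).
rewrite [X in _ = X + _ + _](@bigID _ _ _ _ xs (fun x => 0 <= x)) /=.
have EK : (- (absz K)%:Z) = K by lia.
rewrite EK in E.
have EN : \sum_(i <- xs | ~~ (0 <= i)) (C%:Z * (absz i)%:Z - A%:Z)
        = - \sum_(i <- xs | true && ~~ (0 <= i)) (A%:Z + C%:Z * i).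
  rewrite -sumrN; apply: eq_bigr => x x0.
  have -> : (absz x)%:Z = - x by lia.
  ring.
have EP : \sum_(i <- xs | 0 <= i) (A%:Z + C%:Z * (absz i)%:Z)
        = \sum_(i <- xs | true && (0 <= i)) (A%:Z + C%:Z * i).
  apply: eq_bigr => x x0.
  have -> : (absz x)%:Z = x by lia.
  done.
rewrite EN in E; rewrite EP.
move: E; rewrite -[LHS]/(_ + _)%R => E.
lra.
Qed.

Lemma C6 K xs : validKx K xs ->
  (size (chiP K xs))%:Z - (size (chiH K xs))%:Z = K + (size xs)%:Z.
Proof.
move=> V; case: (lerP 0 K) => K0.
  have [H0 Pp] := chi_pos V K0.
  rewrite H0 (perm_size Pp) size_cat size_map size_iota /=; lia.
have [P1 P2] := chi_neg V K0.
have HC : addn (size [seq x <- xs | 0 <= x]) (size [seq x <- xs | ~~ (0 <= x)]) = size xs.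
  by rewrite !size_filter; exact: count_predC.
have := perm_size P2; have := perm_size P1; rewrite size_cat !size_map size_iota.
move: HC.
set np := size [seq x <- xs | 0 <= x].
set nn := size [seq x <- xs | ~~ (0 <= x)].
clearbody np nn. move=> h1 h2 h3. move: (size (chiP K xs)) (size (chiH K xs)) h2 h3 => a b h2 h3. clear P1 P2 V. have K1 : (K < 0)%R by exact: K0. clear K0. lia.
Qed.

End Part4.

Section Part5.
Set Implicit Arguments. Unset Strict Implicit. Unset Printing Implicit Defensive.

Definition va (C A p : nat) : nat := A + C * p.
Definition vb (C A h : nat) : nat := C * h - A.
Definition ia (C A a : nat) : nat := (a - A) %/ C.
Definition ib (C A b : nat) : nat := (b + A) %/ C.

Definition validAB (C A : nat) (al be : seq nat) : bool :=
  [&& sorted gtn_rel al, all (fun n => n == A %[mod C]) al, sorted gtn_rel be &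
      all (fun n => (0 < n) && (C %| n + A)) be].

Section Vals.
End Vals.

Lemma va_inc C A p q : 0 < C -> (va C A p < va C A q) = (p < q).
Proof. by move=> C0; rewrite /va ltn_add2l ltn_pmul2l. Qed.

Lemma vb_inc C A p q : A < C -> (vb C A p < vb C A q) = (p < q).
Proof.
move=> AC; rewrite /vb.
case: (ltnP p q) => H.
  have : C * p.+1 <= C * q by rewrite leq_mul2l H orbT.
  rewrite mulnS; lia.
have : C * q <= C * p by rewrite leq_mul2l H orbT.
lia.
Qed.

Lemma sorted_map_inc (f : nat -> nat) s : (forall p q, (f p < f q) = (p < q)) ->
  sorted gtn_rel (map f s) = sorted gtn_rel s.
Proof.
move=> Hf; rewrite sorted_map; apply/idP/idP; apply: sub_sorted => a b;
  by rewrite /= /gtn_rel ?Hf.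
Qed.

Lemma iaK C A p : 0 < C -> ia C A (va C A p) = p.
Proof. by move=> C0; rewrite /ia /va addKn mulKn. Qed.

Lemma ibK C A h : A < C -> ib C A (vb C A h) = h.
Proof.
move=> AC; rewrite /ib /vb; case: h => [|h].
  by rewrite muln0 sub0n add0n divn_small.
rewrite subnK ?mulKn //; first lia.
by rewrite mulnS; lia.
Qed.

Lemma vaK C A a : A < C -> a == A %[mod C] -> va C A (ia C A a) = a.
Proof.
move=> AC /eqP H.
have Ha : a = a %/ C * C + A by rewrite {1}(divn_eq a C) H modn_small.
rewrite /va /ia Ha addnK mulnK; last lia.
by rewrite mulnC addnC.
Qed.

Lemma vbK C A b : 0 < b -> C %| b + A -> vb C A (ib C A b) = b.
Proof.
move=> b0 /dvdnP [q Hq]; rewrite /vb /ib Hq mulnK.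
  by rewrite mulnC -Hq addnK.
by case: C Hq => //; rewrite muln0; lia.
Qed.

Lemma ib_pos C A b : 0 < b -> C %| b + A -> 0 < ib C A b.
Proof.
move=> b0 /dvdnP [q Hq]; rewrite /ib Hq.
case: C Hq => [|C] Hq; first by rewrite muln0 in Hq; lia.
rewrite mulnK //; case: q Hq => //; lia.
Qed.

Lemma va_mod C A p : va C A p == A %[mod C].
Proof. by rewrite /va addnC mulnC modnMDl. Qed.

Lemma vb_ok C A h : A < C -> 0 < h -> (0 < vb C A h) && (C %| vb C A h + A).
Proof.
move=> AC h0; rewrite /vb.
have : C <= C * h by rewrite leq_pmulr.
move=> Ch; apply/andP; split; first lia.
by rewrite subnK ?dvdn_mulr //; lia.
Qed.

Local Open Scope ring_scope.

Definition Phi (C A : nat) (l : seq nat) (d : int) : seq nat * seq nat :=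
  (map (va C A) (chiP (d - (size l)%:Z) (xsf l d)),
   map (vb C A) (chiH (d - (size l)%:Z) (xsf l d))).

Definition Psi (C A : nat) (al be : seq nat) : seq nat * int :=
  let P := map (ia C A) al in let H := map (ib C A) be in
  (lam (psiK P H) (psixs P H), psiK P H + (size (psixs P H))%:Z).

Lemma F1 C A l d : (0 < C)%N -> (A < C)%N -> is_partition l ->
  validAB C A (Phi C A l d).1 (Phi C A l d).2.
Proof.
move=> C0 AC Hl; have := C1 (d - (size l)%:Z) (xsf l d).
case/and3P => s1 s2 /allP a2.
apply/and4P; split.
- by rewrite sorted_map_inc // => p q; apply: va_inc.
- by apply/allP => x /mapP [p _ ->]; apply: va_mod.
- by rewrite sorted_map_inc // => p q; apply: vb_inc.
- by apply/allP => x /mapP [h /a2 h0 ->]; apply: vb_ok.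
Qed.

Lemma mapiaK C A al : (A < C)%N -> all (fun n => n == A %[mod C])%N al ->
  map (va C A) (map (ia C A) al) = al.
Proof.
move=> AC /allP H; rewrite -map_comp; rewrite -[RHS]map_id; apply/eq_in_map => x xin.
exact: vaK (H _ xin).
Qed.

Lemma mapibK C A be : all (fun n => (0 < n) && (C %| n + A))%N be ->
  map (vb C A) (map (ib C A) be) = be.
Proof.
move=> /allP H; rewrite -map_comp; rewrite -[RHS]map_id; apply/eq_in_map => x xin.
by case/andP: (H _ xin) => ? ?; apply: vbK.
Qed.

Lemma validPH_of C A al be : (0 < C)%N -> (A < C)%N -> validAB C A al be ->
  validPH (map (ia C A) al) (map (ib C A) be).
Proof.
move=> C0 AC /and4P [s1 a1 s2 a2].
apply/and3P; split.
- rewrite -(sorted_map_inc _ (fun p q => va_inc A p q C0)).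
  by rewrite mapiaK.
- rewrite -(sorted_map_inc _ (fun p q => vb_inc p q AC)).
  by rewrite mapibK.
- apply/allP => h /mapP [b bin ->].
  by case/andP: (allP a2 _ bin) => ? ?; apply: ib_pos.
Qed.

Lemma F2 C A al be : (0 < C)%N -> (A < C)%N -> validAB C A al be ->
  is_partition (Psi C A al be).1.
Proof.
move=> C0 AC V; apply: V2; apply: C2; exact: validPH_of.
Qed.

Lemma F3 C A l d : (0 < C)%N -> (A < C)%N -> is_partition l ->
  Psi C A (Phi C A l d).1 (Phi C A l d).2 = (l, d).
Proof.
move=> C0 AC Hl; rewrite /Psi /Phi /=.
rewrite -!map_comp.
rewrite (eq_map (fun p => iaK A p C0)) (eq_map (fun h => ibK h AC)) !map_id.
have [-> ->] := C3 (V1 d Hl).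
by rewrite R1 size_xsf subrK.
Qed.

Lemma F4 C A al be : (0 < C)%N -> (A < C)%N -> validAB C A al be ->
  Phi C A (Psi C A al be).1 (Psi C A al be).2 = (al, be).
Proof.
move=> C0 AC V; have V' := validPH_of C0 AC V.
have Vk := C2 V'.
rewrite /Phi /Psi /= size_lam addrK R2 //.
have [-> ->] := C4 V'.
case/and4P: V => _ a1 _ a2.
by rewrite mapiaK // mapibK.
Qed.

Lemma Posz_sum (I : Type) (r : seq I) (F : I -> nat) :
  (\sum_(i <- r) F i)%N%:Z = \sum_(i <- r) (F i)%:Z.
Proof. by rewrite -natz natr_sum; apply: eq_bigr => i _; rewrite natz. Qed.

Lemma F5 C A l d : (0 < C)%N -> (A < C)%N -> is_partition l ->
  (sumn (Phi C A l d).1)%:Z + (sumn (Phi C A l d).2)%:Z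
  = A%:Z * d + C%:Z * binz d + C%:Z * (sumn l)%:Z.
Proof.
move=> C0 AC Hl; rewrite /Phi /=.
set K := d - (size l)%:Z; set xs := xsf l d.
rewrite -W1 -C5; last exact: V1.
rewrite !sumnE !big_map !Posz_sum.
congr (_ + _); apply: eq_big_seq => h.
rewrite mem_chiH => /andP [h0 _].
rewrite /vb.
have : (C <= C * h)%N by rewrite leq_pmulr.
move=> H; rewrite -PoszM; lia.
Qed.

Lemma F6 C A l d : is_partition l ->
  (size (Phi C A l d).1)%:Z - (size (Phi C A l d).2)%:Z = d.
Proof.
move=> Hl; rewrite /Phi /= !size_map C6; last exact: V1.
by rewrite size_xsf subrK.
Qed.

End Part5.

Section Part6.
Set Implicit Arguments. Unset Strict Implicit. Unset Printing Implicit Defensive.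

Lemma sum_pair t (g : 'I_t * bool -> nat) :
  \sum_(k : 'I_t * bool) g k = \sum_(i < t) (g (i, true) + g (i, false)).
Proof.
transitivity (\sum_(p : 'I_t * bool | xpredT p.1 && xpredT p.2) g (p.1, p.2)).
  by apply: eq_bigr => [[i b]].
rewrite -(pair_big xpredT xpredT (fun i b => g (i, b))); apply: eq_bigr => i _.
by rewrite big_bool.
Qed.

Definition inS0 t (C A : 'I_t -> nat) (k : 'I_t * bool) (n : nat) : bool :=
  if k.2 then n == A k.1 %[mod C k.1] else (0 < n) && (C k.1 %| n + A k.1).

Definition Epred t (C A : 'I_t -> nat) (M : int) (f : {ffun 'I_t * bool -> seq nat}) : Prop :=
  [/\ forall k, sorted gtn_rel (f k) && all (inS0 C A k) (f k),
      Posz (\sum_(k : 'I_t * bool) sumn (f k)) = M &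
      odd (\sum_(k : 'I_t * bool) size (f k))].

Local Open Scope ring_scope.

Definition FF t (C A : 'I_t -> nat) (x : {ffun 'I_t -> seq nat} * {ffun 'I_t -> int})
  : {ffun 'I_t * bool -> seq nat} :=
  [ffun k => if k.2 then (Phi (C k.1) (A k.1) (x.1 k.1) (x.2 k.1)).1
             else (Phi (C k.1) (A k.1) (x.1 k.1) (x.2 k.1)).2].

Definition GG t (C A : 'I_t -> nat) (f : {ffun 'I_t * bool -> seq nat})
  : {ffun 'I_t -> seq nat} * {ffun 'I_t -> int} :=
  ([ffun i => (Psi (C i) (A i) (f (i, true)) (f (i, false))).1],
   [ffun i => (Psi (C i) (A i) (f (i, true)) (f (i, false))).2]).

Lemma parity_lemma t (a b : 'I_t -> nat) (d : 'I_t -> int) :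
  (forall i, (a i)%:Z - (b i)%:Z = d i) ->
  odd (\sum_(i < t) (a i + b i))%N = ~~ (2 %| \sum_(i < t) d i)%Z.
Proof.
move=> H.
have E : \sum_(i < t) d i = (\sum_(i < t) (a i + b i))%N%:Z - 2 * (\sum_(i < t) b i)%N%:Z.
  rewrite !Posz_sum mulr_sumr -sumrB; apply: eq_bigr => i _; rewrite -H; lia.
rewrite E; lia.
Qed.

Lemma key_rel t (C A : 'I_t -> nat) (M : int) (al be : 'I_t -> seq nat)
  (mu : 'I_t -> seq nat) (d : 'I_t -> int) :
  (forall i, 0 < C i)%N -> (forall i, A i < C i)%N ->
  (forall i, is_partition (mu i)) ->
  (forall i, Phi (C i) (A i) (mu i) (d i) = (al i, be i)) ->
  ((\sum_(i < t) ((C i)%:Z * (sumn (mu i))%:Z) + \sum_(i < t) ((C i)%:Z * binz (d i))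
    + \sum_(i < t) ((A i)%:Z * d i) + 0%:Z = M) <->
   ((\sum_(i < t) (sumn (al i) + sumn (be i)))%N%:Z = M)) /\
  (~~ (2 %| \sum_(i < t) d i)%Z = odd (\sum_(i < t) (size (al i) + size (be i)))%N).
Proof.
move=> C0 AC Hp Hph; split; last first.
  rewrite (parity_lemma (d := d)) // => i.
  by have := F6 (C i) (A i) (d i) (Hp i); rewrite Hph.
have -> : (\sum_(i < t) (sumn (al i) + sumn (be i)))%N%:Z
  = \sum_(i < t) ((C i)%:Z * (sumn (mu i))%:Z) + \sum_(i < t) ((C i)%:Z * binz (d i))
    + \sum_(i < t) ((A i)%:Z * d i).
  rewrite Posz_sum -!big_split /=; apply: eq_bigr => i _.
  have := F5 (d i) (C0 i) (AC i) (Hp i); rewrite Hph /= => E; rewrite PoszD E; ring.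
by rewrite addr0.
Qed.

Lemma Glob1 t (C A : 'I_t -> nat) (M : int) :
  (forall i, 0 < C i)%N -> (forall i, A i < C i)%N ->
  ncard (tuple_rep C A 0 M) = ncard (Epred C A M).
Proof.
move=> C0 AC.
apply: (@ncard_bij _ _ _ _ (FF C A) (GG C A)).
- move=> [mu d] [/= Hp Hpar Hsum].
  have K := key_rel (al := fun i => (Phi (C i) (A i) (mu i) (d i)).1)
                    (be := fun i => (Phi (C i) (A i) (mu i) (d i)).2) M C0 AC Hp
                    (fun i => surjective_pairing _).
  case: K => [[K1 _] K2]; split.
  + case=> i b; rewrite /FF ffunE /=.
    have /and4P [s1 a1 s2 a2] := F1 (d i) (C0 i) (AC i) (Hp i).
    by case: b; rewrite /inS0 /= ?s1 ?a1 ?s2 ?a2.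
  + rewrite (sum_pair (fun k => sumn (FF C A (mu, d) k))) /=.
    rewrite -{}K1 //; congr Posz; apply: eq_bigr => i _; by rewrite /FF !ffunE.
  + rewrite (sum_pair (fun k => size (FF C A (mu, d) k))) /=.
    move: Hpar; rewrite K2; congr odd; apply: eq_bigr => i _; by rewrite /FF !ffunE.
- move=> f [Hv Hsum Hpar].
  have Vi : forall i, validAB (C i) (A i) (f (i, true)) (f (i, false)).
    move=> i; have /andP [s1 a1] := Hv (i, true); have /andP [s2 a2] := Hv (i, false).
    by apply/and4P; split.
  have Hp : forall i, is_partition ((GG C A f).1 i).
    by move=> i; rewrite /GG ffunE; apply: F2.
  have Hph : forall i, Phi (C i) (A i) ((GG C A f).1 i) ((GG C A f).2 i) = (f (i, true), f (i, false)).
    by move=> i; rewrite /GG !ffunE; apply: F4.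
  have := key_rel M C0 AC Hp Hph; case=> [[_ K1] K2]; split => //.
  + rewrite K2; move: Hpar; rewrite (sum_pair (fun k => size (f k))) //.
  + apply: K1; rewrite -Hsum (sum_pair (fun k => sumn (f k))) //.
- move=> [mu d] [/= Hp _ _]; rewrite /GG; congr pair; apply/ffunP => i; rewrite !ffunE;
    have E := F3 (d i) (C0 i) (AC i) (Hp i).
  + by rewrite E.
  + by rewrite E.
- move=> f [Hv _ _]; apply/ffunP => [[i b]]; rewrite /FF /GG !ffunE.
  have Vi : validAB (C i) (A i) (f (i, true)) (f (i, false)).
    have /andP [s1 a1] := Hv (i, true); have /andP [s2 a2] := Hv (i, false).
    by apply/and4P; split.
  by rewrite F4 //; case: b.
Qed.

End Part6.

Section Part7.
Set Implicit Arguments. Unset Strict Implicit. Unset Printing Implicit Defensive.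

Lemma sorted_split0 (s : seq nat) : sorted gtn_rel s ->
  s = [seq n <- s | 0 < n] ++ (if 0 \in s then [:: 0] else [::]).
Proof.
elim: s => //= a s IH Hs.
have Hs' : sorted gtn_rel s by move: Hs; case: s {IH} => //= b s /andP [].
case: a Hs => [|a] Hs.
  by move: Hs; case: s {IH Hs'} => //= b s /andP [].
by rewrite in_cons /= {1}(IH Hs').
Qed.

Lemma sumn_filter_pos (s : seq nat) : sumn [seq n <- s | 0 < n] = sumn s.
Proof. by elim: s => //= a s IH; case: a => //= a; rewrite IH. Qed.

Lemma sorted_cat0 (s : seq nat) : sorted gtn_rel s -> all (fun n => 0 < n) s ->
  sorted gtn_rel (s ++ [:: 0]).
Proof.
elim: s => //= a s IH Hs /andP [a0 Ha].
have Hs' : sorted gtn_rel s by move: Hs; case: s {IH Ha} => //= b s /andP [].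
move: (IH Hs' Ha) Hs; case: s {IH Ha Hs'} => [|b s] /=; first by rewrite /gtn_rel a0.
by move=> -> /andP [-> _].
Qed.

Lemma sumS t (S : {set 'I_t}) (j0 : 'I_t) (e : bool) : j0 \notin S ->
  \sum_(i < t) ((i \in S) || ((i == j0) && e) : nat) = #|S| + e.
Proof.
move=> nj.
have cS : #|S| = \sum_(i < t) ((i \in S) : nat).
  by rewrite -sum1_card big_mkcond /=; apply: eq_bigr => i _; case: (i \in S).
rewrite cS (bigD1 j0) //= [X in _ = X + _](bigD1 j0) //= (negbTE nj) eqxx /=.
rewrite add0n addnC; congr (_ + _); apply: eq_bigr => i /negbTE ->.
by rewrite andFb orbF.
Qed.

Lemma inS_zero t (C A : 'I_t -> nat) i : (A i < C i)%N -> (0 == A i %[mod C i]) = (A i == 0).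
Proof. by move=> AC; rewrite mod0n modn_small // eq_sym. Qed.

Lemma inS0_inS t (C A : 'I_t -> nat) k n : (A k.1 < C k.1)%N ->
  inS C A k n = (0 < n) && inS0 C A k n.
Proof. by move=> AC; rewrite /inS /inS0; case: k.2; rewrite //= andbA andbb. Qed.

Lemma zero_inS0 t (C A : 'I_t -> nat) k : (A k.1 < C k.1)%N ->
  inS0 C A k 0 = k.2 && (A k.1 == 0).
Proof. by move=> AC; rewrite /inS0; case: k.2 => //; rewrite inS_zero. Qed.

Lemma Glob2 t (C A : 'I_t -> nat) (M : int) :
  (forall i, 0 < C i)%N -> (forall i, A i < C i)%N ->
  ncard (Epred C A M) = (2 ^ (maxn (zcount A) 1 - 1) * Dcount C A M)%N.
Proof.
move=> C0 AC.
case: (boolP [forall i, A i != 0]) => HA.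
  have -> : zcount A = 0.
    apply: eq_card0 => i; rewrite /= inE; apply/negbTE; exact: (forallP HA).
  rewrite mul1n /Dcount; apply: ncard_ext => f; split.
    case=> Hv Hs Hp; split => // k; case/andP: (Hv k) => s a; rewrite s /=.
    apply/allP => n nin; rewrite inS0_inS ?(allP a _ nin) ?andbT //.
    case: n nin => // nin; have := allP a _ nin; rewrite zero_inS0 //.
    by rewrite (negbTE (forallP HA k.1)) andbF.
  case=> Hv Hs Hp; split => //; last exact: Hp.
  move=> k; case/andP: (Hv k) => s a; rewrite s /=.
  by apply/allP => n /(allP a); rewrite inS0_inS // => /andP [].
have [j0 Aj0] : exists j0, A j0 = 0.
  move: HA; rewrite negb_forall => /existsP [j0 /negPn /eqP]; by exists j0.
set Zs := [set i | A i == 0].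
set Z' := Zs :\ j0.
have Hz : zcount A = #|Z'|.+1.
  have E1 : zcount A = #|Zs| by rewrite /zcount; apply: eq_card => i; rewrite !inE.
  have j0Z : j0 \in Zs by rewrite inE Aj0.
  by rewrite E1 (cardsD1 j0 Zs) j0Z.
rewrite Hz /maxn /= subn1 /= -card_powerset.
have -> : #|powerset Z'| = size (enum (powerset Z')) by rewrite cardE.
rewrite mulnC /Dcount -ncard_prod ?enum_uniq //.
pose fwd (f : {ffun 'I_t * bool -> seq nat}) :=
  ([ffun k => [seq n <- f k | 0 < n]], [set i in Z' | 0 \in f (i, true)]).
pose bwd (p : {ffun 'I_t * bool -> seq nat} * {set 'I_t}) : {ffun 'I_t * bool -> seq nat} :=
  [ffun k => p.1 k ++ (if k.2 && ((k.1 \in p.2) ||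
         ((k.1 == j0) && ~~ odd (\sum_(k' : 'I_t * bool) size (p.1 k') + #|p.2|)))
       then [:: 0] else [::])].
have HA' : ~ ([forall i, A i != 0]) by move=> H; move: HA; rewrite H.
have j0Z' : j0 \notin Z' by rewrite !inE eqxx.
have Z'P : forall i, (i \in Z') = (i != j0) && (A i == 0) by move=> i; rewrite !inE.
apply: (@ncard_bij _ _ _ _ fwd bwd).
- move=> f [Hv Hs Hp]; split.
  + split.
    * move=> k; rewrite ffunE; case/andP: (Hv k) => s a; apply/andP; split.
        exact: (sorted_filter gtn_trans).
      apply/allP => n; rewrite mem_filter => /andP [n0 nin]; rewrite inS0_inS // n0.
      exact: (allP a _ nin).
    * rewrite -Hs; congr Posz; apply: eq_bigr => k _; by rewrite ffunE sumn_filter_pos.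
    * by move=> H; case: HA'.
  + rewrite mem_enum powersetE; apply/subsetP => i; rewrite inE => /andP [H _]; exact: H.
- move=> [g S] [[Hv Hs _] HS] /=.
  rewrite mem_enum powersetE in HS.
  have j0S : j0 \notin S by apply/negP => /(subsetP HS); rewrite (negbTE j0Z').
  split.
  + move=> [i b]; rewrite ffunE /=; case/andP: (Hv (i, b)) => s a.
    have apos : all (fun n => 0 < n) (g (i, b)).
      by apply/allP => n /(allP a); rewrite /inS => /andP [].
    have ainS0 : all (inS0 C A (i, b)) (g (i, b)).
      by apply/allP => n /(allP a); rewrite inS0_inS // => /andP [].
    case: ifP => Hc; last by rewrite cats0 s ainS0.
    apply/andP; split; first exact: sorted_cat0.
    rewrite all_cat ainS0 /= andbT zero_inS0 //=.
    move/andP: Hc => [-> /orP [iS| /andP [/eqP -> _]]]; last by rewrite Aj0.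
    by have := subsetP HS _ iS; rewrite Z'P => /andP [_ ->].
  + rewrite -Hs; congr Posz; apply: eq_bigr => k _; rewrite ffunE sumn_cat.
    by case: ifP => //= _; rewrite !addn0.
  + set e := ~~ odd (\sum_(k' : 'I_t * bool) size (g k') + #|S|).
    have E : \sum_(k : 'I_t * bool) size (bwd (g, S) k)
           = \sum_(k : 'I_t * bool) size (g k) + (#|S| + e).
      rewrite -(sumS _ j0S) (sum_pair (fun k => size (bwd (g, S) k)))
              (sum_pair (fun k => size (g k))) -big_split /=.
      apply: eq_bigr => i _; rewrite !ffunE /= !size_cat.
      by case: ((i \in S) || (i == j0) && e) => /=; lia.
    rewrite E addnA oddD /e; by case: (odd _).
- move=> f [Hv Hs Hp].
  have Z0 : forall i, 0 \in f (i, true) -> A i = 0.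
    move=> i H; case/andP: (Hv (i, true)) => _ a.
    by have := allP a _ H; rewrite zero_inS0 //= => /eqP.
  have Nf : forall i, 0 \notin f (i, false).
    move=> i; apply/negP => H; case/andP: (Hv (i, false)) => _ a.
    by have := allP a _ H; rewrite zero_inS0.
  set S' := (fwd f).2; set g := (fwd f).1.
  have gE : forall k, g k = [seq n <- f k | 0 < n] by move=> k; rewrite /g ffunE.
  have S'E : forall i, (i \in S') = (i != j0) && (0 \in f (i, true)).
    move=> i; rewrite /S' /= inE Z'P.
    case E: (0 \in f (i, true)); last by rewrite !andbF.
    by rewrite (Z0 _ E) eqxx !andbT.
  have sz : forall k, size (f k) = size (g k) + (0 \in f k).
    move=> k; case/andP: (Hv k) => s _.
    by rewrite gE {1}(sorted_split0 s) size_cat; case: (0 \in f k).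
  set e := 0 \in f (j0, true).
  have Hsize : \sum_(k : 'I_t * bool) size (f k)
      = \sum_(k : 'I_t * bool) size (g k) + (#|S'| + e).
    have j0S : j0 \notin S' by rewrite S'E eqxx.
    rewrite -(sumS _ j0S) (sum_pair (fun k => size (f k)))
            (sum_pair (fun k => size (g k))) -big_split /=.
    apply: eq_bigr => i _; rewrite !sz (negbTE (Nf i)) addn0 S'E.
    case: (i =P j0) => [->|/eqP ne] /=; first by rewrite /e; case: (0 \in f (j0, true)); rewrite /= ?orbF; lia.
    rewrite orbF; lia.
  apply/ffunP => [[i b]]; rewrite ffunE /=.
  case/andP: (Hv (i, b)) => s _.
  rewrite [RHS](sorted_split0 s) -gE; congr (_ ++ _).
  have -> : (b && ((i \in S') || (i == j0) &&
        ~~ odd (\sum_(k' : 'I_t * bool) size (g k') + #|S'|))) = (0 \in f (i, b)).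
    case: b s => s; last by rewrite (negbTE (Nf i)).
    rewrite S'E /=.
    case: (i =P j0) => [->|/eqP ne] /=.
      move: Hp; rewrite Hsize addnA oddD -/e; clear Hsize; rewrite /e; case: (0 \in f (j0, true)); by case: (odd _).
    by rewrite orbF.
  done.
- move=> [g S] [[Hv _ _] HS] /=.
  rewrite mem_enum powersetE in HS.
  have gpos : forall k, all (fun n => 0 < n) (g k).
    by move=> k; case/andP: (Hv k) => _ a; apply/allP => n /(allP a); rewrite /inS => /andP [].
  rewrite /fwd; congr pair.
  + apply/ffunP => k; rewrite !ffunE filter_cat.
    rewrite (all_filterP (gpos k)); by case: ifP => _ /=; rewrite cats0.
  + apply/setP => i; rewrite !inE ffunE /= mem_cat.
    have -> : (0 \in g (i, true)) = false.
      by apply/negP => /(allP (gpos (i, true))).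
    case iS: (i \in S).
      by have := subsetP HS _ iS; rewrite Z'P => -> /=.
    by case: (i =P j0) => [->|] /=; rewrite ?eqxx ?andbF // ?andFb; case: ifP.
Qed.

End Part7.

Section Part8.
Set Implicit Arguments. Unset Strict Implicit. Unset Printing Implicit Defensive.

Lemma main_count t (C A : 'I_t -> nat) (M : int) :
  (forall i, 0 < C i)%N -> (forall i, A i < C i)%N ->
  ncard (tuple_rep C A 0 M) = (2 ^ (maxn (zcount A) 1 - 1) * Dcount C A M)%N.
Proof. by move=> C0 hAC; rewrite (Glob1 M C0 hAC) Glob2. Qed.

Local Open Scope ring_scope.

Lemma shift_rep t (C A : 'I_t -> nat) (m : nat) (N : int) :
  ncard (tuple_rep C A m N) = ncard (tuple_rep C A 0 (N - m%:Z)).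
Proof.
apply: ncard_ext => x; rewrite /tuple_rep; split; case=> h1 h2 h3; split => //; lia.
Qed.

Lemma ratlemma (a b x y : nat) :
  (2 ^ a * x = 2 ^ b * y)%N <-> (x%:Q = 2%:Q ^ ((b.+1)%:Z - (a.+1)%:Z) * y%:Q).
Proof.
have -> : (b.+1)%:Z - (a.+1)%:Z = b%:Z + (- a%:Z) by lia.
rewrite expfzDr // -invr_expz.
have h2 : (2%:Q ^ a%:Z) != 0 by rewrite expfz_neq0.
have cast : forall n : nat, (n%:Z)%:~R = n%:R :> rat by move=> n; rewrite pmulrn.
rewrite !cast.
have e2 : forall n : nat, (2%:Q ^ n%:Z) = (2 ^ n)%N%:R by move=> n; rewrite natrX /= cast.
rewrite !e2.
have h2' : (2 ^ a)%N%:R != 0 :> rat by rewrite -e2.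
split => [E|E].
  have -> : (x%:R : rat) = ((2^a)%N%:R)^-1 * (2^a * x)%N%:R.
    by rewrite natrM mulrA mulVf // mul1r.
  by rewrite E natrM mulrA [_^-1 * _]mulrC.
apply/eqP; rewrite -(eqr_nat rat) !natrM E.
by rewrite mulrA mulrCA mulfV // mulr1.
Qed.


End Part8.

Unset Implicit Arguments.
Theorem theorem2p3 (t : nat) (C A B : 'I_t -> nat) (m N0 : nat) :
  (1 <= t)%N ->
  (forall i, 1 <= C i)%N ->
  (forall i, 2 * A i <= C i)%N ->
  (forall i, 2 * B i <= C i)%N ->
  (1 <= N0)%N ->
  (forall N : nat, (N0 <= N)%N ->
     ncard (tuple_rep C A 0 N%:Z) = ncard (tuple_rep C B m N%:Z))
  <->
  (forall N : nat, (N0 <= N)%N ->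
     ((Dcount C A N%:Z)%:Q =
        (2%:Q ^ ((maxn (zcount B) 1)%:Z - (maxn (zcount A) 1)%:Z))
        * (Dcount C B (N%:Z - m%:Z))%:Q)%R).
Proof.
move=> _ C1 hA hB _.
have hAC : forall i, (A i < C i)%N by move=> i; have := C1 i; have := hA i; lia.
have hBC : forall i, (B i < C i)%N by move=> i; have := C1 i; have := hB i; lia.
have key : forall N : nat,
  ncard (tuple_rep C A 0 N%:Z) = ncard (tuple_rep C B m N%:Z) <->
  ((Dcount C A N%:Z)%:Q = (2%:Q ^ ((maxn (zcount B) 1)%:Z - (maxn (zcount A) 1)%:Z))
        * (Dcount C B (N%:Z - m%:Z))%:Q)%R.
  move=> N; rewrite (shift_rep C B m) !main_count //.
  have ea : maxn (zcount A) 1 = (maxn (zcount A) 1 - 1).+1 by lia.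
  have eb : maxn (zcount B) 1 = (maxn (zcount B) 1 - 1).+1 by lia.
  have := ratlemma (maxn (zcount A) 1 - 1) (maxn (zcount B) 1 - 1)
    (Dcount C A N%:Z) (Dcount C B (N%:Z - m%:Z)).
  rewrite -ea -eb; exact.
split => H N HN; apply/key; exact: H.
Qed.
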